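(* There exists an instance of the two-party spatial voting game with abstention described in the context, with $X$ consisting of seven policies, both parties' preferences strict and single-peaked, and four voters, that has a pure-strategy Nash equilibrium $(s,t)$ exhibiting mutual leapfrogging, i.e. $t<\tau_A<\tau_B<s$, and at which every voter is active.
   Context: Policy space: $X=\{x_j : j\in I\}$ where $I\subseteq\mathbb Z$ is an interval of integers and $x_j<x_{j+1}$; $X$ is linearly ordered by $<$. Parties: two parties $A$ and $B$ with ideal points $\tau_A=x_p$ and $\tau_B=x_q$, where $p<q$. Each party $i\in\{A,B\}$ has a weak preference order $\succeq_i$ on $X$ with unique ideal point $\tau_i$. Single-peakedness of $\succeq_i$: if $x_a<x_b\le\tau_i$ then $x_b\succ_i x_a$, and if $\tau_i\le x_b<x_a$ then $x_b\succ_i x_a$ (no restriction is imposed on comparisons across opposite sides of $\tau_i$). Voters: a finite electorate $V$. Each voter $v\in V$ has an ideal point $\theta_v\in X$, strict single-peaked preferences over $X$ with peak $\theta_v$, and an attraction interval $A_v\subseteq X$, an interval of the order on $X$ containing $\theta_v$. Election: party $A$ chooses $s\in X$, party $B$ chooses $t\in X$. Voter $v$ is active at $(s,t)$ if $s\in A_v$ or $t\in A_v$. An active voter votes for the platform she strictly prefers and abstains if indifferent (in particular if $s=t$); inactive voters abstain. $N_A(s,t)$ (resp. $N_B(s,t)$) is the number of active voters strictly preferring $s$ to $t$ (resp. $t$ to $s$). The outcome $g(s,t)$ is $A$ if $N_A>N_B$, $B$ if $N_B>N_A$, and $T$ (tie) if equal. Party objectives (lexicographic): Win $\succ$ Tie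 $\succ$ Lose for each party (outcome $A$ is a win for $A$ and a loss for $B$, and vice versa); between profiles with the same electoral outcome, $A$ weakly prefers $(s,t)$ to $(s',t')$ iff $s\succeq_A s'$, and $B$ iff $t\succeq_B t'$. A pure-strategy Nash equilibrium is a profile at which neither party has a strictly preferred unilateral deviation. *)

(* Defs.v *)
From mathcomp Require Import all_boot.
Set Implicit Arguments. Unset Strict Implicit. Unset Printing Implicit Defensive.

(* Policy space: 'I_n = {x_0 < ... < x_{n-1}}, ordered by the nat order. *)

Section Game.
Variable n : nat.
Local Notation X := 'I_n.

(* A weak preference order (complete preorder): r x y means "x is weakly
   preferred to y". *)
Definition weak_order (r : rel X) : Prop :=
  reflexive r /\ transitive r /\ total r.

Definition strict_order (r : rel X) : Prop :=
  weak_order r /\ antisymmetric r.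

Definition spref (r : rel X) (x y : X) : bool := r x y && ~~ r y x.

Definition ideal_point (r : rel X) (tau : X) : Prop :=
  forall x, x != tau -> spref r tau x.

(* single-peakedness w.r.t. the peak tau (no cross-side restriction) *)
Definition single_peaked (r : rel X) (tau : X) : Prop :=
  ideal_point r tau /\
  (forall a b : X, a < b -> b <= tau -> spref r b a) /\
  (forall a b : X, tau <= b -> b < a -> spref r b a).

Definition is_interval (A : {set X}) : Prop :=
  forall a b c : X, a \in A -> c \in A -> a <= b -> b <= c -> b \in A.

Variables (V : finType) (pv : V -> rel X) (att : V -> {set X}).

Definition active (s t : X) (v : V) : bool := (s \in att v) || (t \in att v).

Definition NA (s t : X) : nat := #|[set v | active s t v & spref (pv v) s t]|.
Definition NB (s t : X) : nat := #|[set v | active s t v & spref (pv v) t s]|.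

Inductive outcome := WinA | WinB | Tie.

Definition g (s t : X) : outcome :=
  if NB s t < NA s t then WinA else if NA s t < NB s t then WinB else Tie.

Definition rankA (o : outcome) : nat :=
  match o with WinA => 2 | Tie => 1 | WinB => 0 end.
Definition rankB (o : outcome) : nat :=
  match o with WinB => 2 | Tie => 1 | WinA => 0 end.

Variables (prefA prefB : rel X).

Definition A_strictly_prefers (s' t' s t : X) : Prop :=
  rankA (g s t) < rankA (g s' t') \/
  (g s' t' = g s t /\ spref prefA s' s).

Definition B_strictly_prefers (s' t' s t : X) : Prop :=
  rankB (g s t) < rankB (g s' t') \/
  (g s' t' = g s t /\ spref prefB t' t).

Definition nash_eq (s t : X) : Prop :=
  (forall s', ~ A_strictly_prefers s' t s t) /\
  (forall t', ~ B_strictly_prefers s t' s t).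

End Game.

(* Main.v *)
Require Import Defs.
From mathcomp Require Import all_boot.
Set Implicit Arguments. Unset Strict Implicit. Unset Printing Implicit Defensive.

Definition rrel (n : nat) (l : seq nat) : rel 'I_n :=
  fun x y => nth 0 l x <= nth 0 l y.
Arguments rrel : clear implicits.

Definition sprefN (l : seq nat) (a b : nat) : bool :=
  (nth 0 l a <= nth 0 l b) && ~~ (nth 0 l b <= nth 0 l a).

Lemma sprefE n l (x y : 'I_n) : spref (rrel n l) x y = sprefN l x y.
Proof. by []. Qed.

Lemma allI n (P : pred nat) : all P (iota 0 n) -> forall x : 'I_n, P (val x).
Proof. by move=> /allP H x; apply: H; rewrite mem_iota /=. Qed.

Definition injN n (l : seq nat) :=
  all (fun i => all (fun j => (nth 0 l i == nth 0 l j) ==> (i == j)) (iota 0 n)) (iota 0 n).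

Lemma rrel_strict n l : injN n l -> strict_order (rrel n l).
Proof.
move=> H; split; [split; [|split]|].
- by move=> x; exact: leqnn.
- by move=> y x z; rewrite /rrel; apply: leq_trans.
- by move=> x y; rewrite /rrel leq_total.
- move=> x y /andP[h1 h2].
  have := allI H x => /(allI) /(_ y) /implyP h.
  apply/val_inj/eqP; apply: h; rewrite eqn_leq; apply/andP; split; [exact h1|exact h2].
Qed.

Definition spN n (l : seq nat) (tau : nat) :=
  all (fun a => all (fun b =>
     [&& (a != tau) ==> sprefN l tau a,
         (a < b) ==> (b <= tau) ==> sprefN l b a &
         (tau <= b) ==> (b < a) ==> sprefN l b a]) (iota 0 n)) (iota 0 n).

Lemma spbP n l (tau : 'I_n) : spN n l tau -> single_peaked (rrel n l) tau.
Proof.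
move=> H.
have K : forall a b : 'I_n, [&& (val a != val tau) ==> sprefN l tau a,
         (a < b) ==> (b <= tau) ==> sprefN l b a &
         (tau <= b) ==> (b < a) ==> sprefN l b a].
  by move=> a b; exact: (allI (allI H a) b).
split; [|split].
- move=> x hx; have /and3P[h _ _] := K x x; rewrite sprefE; apply: (implyP h).
  by rewrite val_eqE.
- move=> a b h1 h2; have /and3P[_ h _] := K a b; rewrite sprefE.
  by move: h; rewrite h1 h2.
- move=> a b h1 h2; have /and3P[_ _ h] := K a b; rewrite sprefE.
  by move: h; rewrite h1 h2.
Qed.

Definition iv n (a b : nat) : {set 'I_n} := [set x : 'I_n | a <= x <= b].
Arguments iv : clear implicits.

Lemma iv_interval n a b : is_interval (iv n a b).
Proof.
move=> x y z; rewrite !inE => /andP[h1 _] /andP[_ h2] h3 h4.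
by rewrite (leq_trans h1 h3) (leq_trans h4 h2).
Qed.

Lemma cardP m (P : pred nat) (Q : pred 'I_m) : (forall v, Q v = P (val v)) ->
  #|[set v | Q v]| = count P (iota 0 m).
Proof.
move=> H; rewrite cardsE cardE /enum_mem size_filter -val_enum_ord count_map.
rewrite enumT; apply: eq_count => v; exact: H.
Qed.

Definition pAl := [:: 6; 5; 4; 3; 0; 1; 2].
Definition pBl := [:: 6; 4; 3; 2; 1; 0; 5].
Definition VL := [:: [:: 6; 5; 4; 3; 2; 1; 0]; [:: 5; 2; 1; 0; 3; 4; 6];
               [:: 0; 1; 2; 3; 4; 5; 6]; [:: 6; 5; 4; 3; 2; 1; 0]].
Definition loL := [:: 6; 1; 0; 5].
Definition hiL := [:: 6; 3; 4; 6].
Definition thL := [:: 6; 3; 0; 6].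

Definition pA : rel 'I_7 := rrel 7 pAl.
Definition pB : rel 'I_7 := rrel 7 pBl.
Definition pv (v : 'I_4) : rel 'I_7 := rrel 7 (nth [::] VL v).
Definition th (v : 'I_4) : 'I_7 := insubd ord0 (nth 0 thL v).
Definition at4 (v : 'I_4) : {set 'I_7} := iv 7 (nth 0 loL v) (nth 0 hiL v).
Definition o7 (k : nat) (h : k < 7) : 'I_7 := Ordinal h.

Definition actN (a b k : nat) :=
  (nth 0 loL k <= a <= nth 0 hiL k) || (nth 0 loL k <= b <= nth 0 hiL k).
Definition gN (a b : nat) : outcome :=
  let na := count (fun k => actN a b k && sprefN (nth [::] VL k) a b) (iota 0 4) in
  let nb := count (fun k => actN a b k && sprefN (nth [::] VL k) b a) (iota 0 4) in
  if nb < na then WinA else if na < nb then WinB else Tie.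

Lemma gE (s t : 'I_7) : g pv at4 s t = gN s t.
Proof.
have EA : NA pv at4 s t = count (fun k => actN s t k && sprefN (nth [::] VL k) s t) (iota 0 4).
  by apply: cardP => v; rewrite /active /at4 /iv !inE /actN.
have EB : NB pv at4 s t = count (fun k => actN s t k && sprefN (nth [::] VL k) t s) (iota 0 4).
  by apply: cardP => v; rewrite /active /at4 /iv !inE /actN.
by rewrite /g EA EB.
Qed.

Definition nashN (a b : nat) :=
  all (fun a' => ~~ ((rankA (gN a b) < rankA (gN a' b)) ||
     ((rankA (gN a' b) == rankA (gN a b)) && sprefN pAl a' a))) (iota 0 7) &&
  all (fun b' => ~~ ((rankB (gN a b) < rankB (gN a b')) ||
     ((rankB (gN a b') == rankB (gN a b)) && sprefN pBl b' b))) (iota 0 7).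

Lemma nashP (s t : 'I_7) : nashN s t -> nash_eq pv at4 pA pB s t.
Proof.
move=> /andP[H1 H2]; split.
- move=> s' [h|[he hs]]; move: (allI H1 s'); rewrite -!gE; first by rewrite h.
  by rewrite he eqxx -sprefE hs orbT.
- move=> t' [h|[he hs]]; move: (allI H2 t'); rewrite -!gE; first by rewrite h.
  by rewrite he eqxx -sprefE hs orbT.
Qed.

Definition voterN :=
  all (fun k => [&& injN 7 (nth [::] VL k), spN 7 (nth [::] VL k) (nth 0 thL k),
                    nth 0 thL k < 7 & nth 0 loL k <= nth 0 thL k <= nth 0 hiL k])
      (iota 0 4).

Theorem mainTheorem5 :
  exists (prefA prefB : rel 'I_7) (tauA tauB : 'I_7)
         (V : finType) (theta : V -> 'I_7) (pv : V -> rel 'I_7)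
         (att : V -> {set 'I_7}) (s t : 'I_7),
    tauA < tauB /\
    (strict_order prefA /\ single_peaked prefA tauA) /\
    (strict_order prefB /\ single_peaked prefB tauB) /\
    #|V| = 4 /\
    (forall v, [/\ strict_order (pv v), single_peaked (pv v) (theta v),
                   is_interval (att v) & theta v \in att v]) /\
    nash_eq pv att prefA prefB s t /\
    (t < tauA /\ tauA < tauB /\ tauB < s) /\
    (forall v, active att s t v).
Proof.
exists pA, pB, (@o7 4 isT), (@o7 5 isT), ('I_4 : finType), th, pv, at4,
  (@o7 6 isT), (@o7 3 isT).
split; first by [].
split; first by split; [apply: rrel_strict | apply: spbP]; vm_compute.
split; first by split; [apply: rrel_strict | apply: spbP]; vm_compute.
split; first by rewrite card_ord.
split.
  have HV : voterN by vm_compute.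
  move=> v; have /and4P[h1 h2 h3 h4] := allI HV v.
  have Eth : val (th v) = nth 0 thL v by rewrite /th val_insubd h3.
  split.
  - exact: rrel_strict.
  - by apply: spbP; rewrite Eth.
  - exact: iv_interval.
  - by rewrite /at4 inE Eth.
split; first by apply: nashP; vm_compute.
split; first by [].
have HA : all (fun k => actN 6 3 k) (iota 0 4) by vm_compute.
move=> v; have := allI HA v.
by rewrite /actN /active /at4 /iv !inE.
Qed.
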